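(* Let $n\ge 1$ and $h\ge 1$ be integers. Let $\mathcal{B}$ be the set of $(2n+1)\times(2n+1)$ integer matrices $B=(B_{i,j})_{i,j\in\{-n,\ldots,n\}}$ (rows and columns indexed by $-n,\ldots,n$) such that: $B_{i,i+1}=1$ for $i\in\{-n,\ldots,0\}$; $B_{i,i+1}=h$ for $i\in\{1,\ldots,n-1\}$; $B_{i,j}\in\{0,1,\ldots,h-1\}$ for $i\in\{1,\ldots,n\}$ and $j\in\{-n,\ldots,-1\}$ (these $n^2$ entries are arbitrary in this range); and all other entries of $B$ are $0$. Let $\mathcal{P}$ be the set of monic integer polynomials of the form $$t^{2n+1}-a_{2n-2}t^{2n-2}-a_{2n-3}t^{2n-3}-\cdots-a_1t-a_0$$ (so the coefficients of $t^{2n}$ and $t^{2n-1}$ are zero) where $a_{2n-k}\in\{0,1,\ldots,h^{k-1}-1\}$ for each $k\in\{2,\ldots,n+1\}$, and $a_{n-k}/h^{k-1}\in\{0,1,\ldots,h^{n-k+1}-1\}$ for each $k\in\{2,\ldots,n\}$. Then the map $B\mapsto\det(tI-B)$ is a bijection from $\mathcal{B}$ onto $\mathcal{P}$.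
   Context: $\det(tI-B)$ is the (monic) characteristic polynomial of $B$. *)

(* Defs.v *)
From HB Require Import structures.
From mathcomp Require Import all_boot all_order all_algebra.
Set Implicit Arguments. Unset Strict Implicit. Unset Printing Implicit Defensive.
Import Order.TTheory GRing.Theory Num.Theory.
Local Open Scope ring_scope.

(* Rows/columns indexed by {-n,...,n} are encoded by 'I_(2n+1):
   the ordinal i represents the integer index  i - n. *)
Definition idx (n : nat) (i : 'I_(n.*2.+1)) : int := (i : nat)%:Z - n%:Z.

Definition inB (n h : nat) (B : 'M[int]_(n.*2.+1)) : Prop :=
  forall i j : 'I_(n.*2.+1),
    let i' := idx i in let j' := idx j in
    if (- n%:Z <= i' <= 0) && (j' == i' + 1) then B i j = 1
    else if (1 <= i' <= n%:Z - 1) && (j' == i' + 1) then B i j = h%:Z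
    else if (1 <= i') && (j' <= -1) then (0 <= B i j /\ B i j < h%:Z)
    else B i j = 0.

(* The set \mathcal{P}: p = t^(2n+1) - sum_{m <= 2n-2} a_m t^m, so a_m = - p`_m. *)
Definition inP (n h : nat) (p : {poly int}) : Prop :=
  [/\ size p = n.*2.+2 /\ lead_coef p = 1, p`_(n.*2) = 0, p`_(n.*2 - 1) = 0,
      (forall k : nat, (2 <= k <= n.+1)%N ->
         0 <= - p`_(n.*2 - k) /\ - p`_(n.*2 - k) < h%:Z ^+ (k - 1)) &
      (forall k : nat, (2 <= k <= n)%N ->
         exists q : int, - p`_(n - k) = q * h%:Z ^+ (k - 1) /\
                         0 <= q /\ q < h%:Z ^+ (n - k + 1))].

Arguments inB : clear implicits.
Arguments inP : clear implicits.

(* Main.v *)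
Require Import Defs.
From HB Require Import structures.
From mathcomp Require Import all_boot all_order all_algebra.
From mathcomp Require Import zify ring lra.
Set Implicit Arguments. Unset Strict Implicit. Unset Printing Implicit Defensive.
Import Order.TTheory GRing.Theory Num.Theory.
Local Open Scope ring_scope.

Section Dig.
Variable h : nat.
Hypothesis hh : (1 <= h)%N.
Local Notation hz := (h%:Z).

Lemma dig_bound L (d : nat -> int) :
  (forall v, (v < L)%N -> 0 <= d v < hz) ->
  0 <= \sum_(v < L) d v * hz ^+ v < hz ^+ L.
Proof.
elim: L d => [|L IH] d Hd; first by rewrite big_ord0 expr0.
rewrite big_ord_recl /= expr0 mulr1.
have := IH (fun v => d v.+1) (fun v hv => Hd v.+1 hv).
under eq_bigr do rewrite exprS mulrCA.
rewrite -mulr_sumr.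
set S := \sum_(i < L) _ .
have := Hd 0%N isT. rewrite exprS.
set X := hz ^+ L.
have h0 : 0 <= hz by [].
move=> /andP[d0 d1] /andP[s0 s1].
apply/andP; split; nia.
Qed.

Lemma dig_uniq L (d e : nat -> int) :
  (forall v, (v < L)%N -> 0 <= d v < hz) ->
  (forall v, (v < L)%N -> 0 <= e v < hz) ->
  \sum_(v < L) d v * hz ^+ v = \sum_(v < L) e v * hz ^+ v ->
  forall v, (v < L)%N -> d v = e v.
Proof.
elim: L d e => [|L IH] d e Hd He; first by [].
rewrite !big_ord_recl /= !expr0 !mulr1.
under eq_bigr do rewrite exprS mulrCA.
under [X in _ = _ + X]eq_bigr do rewrite exprS mulrCA.
rewrite -!mulr_sumr.
have := @dig_bound L (fun v => d v.+1) (fun v hv => Hd v.+1 hv).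
have := @dig_bound L (fun v => e v.+1) (fun v hv => He v.+1 hv).
set S := \sum_(i < L) d _ * _ .
set T := \sum_(i < L) e _ * _ .
move=> /andP[t0 t1] /andP[s0 s1].
have /andP[d0 d1] := Hd 0%N isT.
have /andP[e0 e1] := He 0%N isT.
move=> E.
have ST : S = T.
  case: (ltrgtP S T) => // H; exfalso; nia.
have de : d 0%N = e 0%N by move: E; rewrite ST => /addIr.
have H := IH (fun v => d v.+1) (fun v => e v.+1) (fun v hv => Hd v.+1 hv) (fun v hv => He v.+1 hv) ST.
by case=> [|v] hv //; apply: H.
Qed.

Lemma dig_exist L (q : nat) : (q < h ^ L)%N ->
  \sum_(v < L) ((q %/ h ^ v) %% h)%:Z * hz ^+ v = q%:Z.
Proof.
elim: L q => [|L IH] q hq.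
  by rewrite big_ord0; move: hq; rewrite expn0 ltnS leqn0 => /eqP->.
rewrite big_ord_recl /= expn0 divn1 expr0 mulr1.
under eq_bigr do rewrite expnS divnMA exprS mulrCA.
rewrite -mulr_sumr IH; last by rewrite ltn_divLR ?expnS // mulnC; move: hq; rewrite expnS.
by rewrite {3}(divn_eq q h) PoszD PoszM addrC mulrC.
Qed.
End Dig.
Lemma sum_pick (R : nzRingType) (L e0 m : nat) (g : nat -> R) :
  \sum_(j < L) g j * (e0 + j == m)%N%:R =
  if (e0 <= m)%N && (m - e0 < L)%N then g (m - e0)%N else 0.
Proof.
elim: L => [|L IH]; first by rewrite big_ord0; case: ifP => //; lia.
rewrite big_ord_recr /= IH.
case: (boolP (e0 + L == m)%N) => E.
  rewrite mulr1; have -> : (m - e0 = L)%N by lia.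
  rewrite ifF ?add0r; last by lia.
  by rewrite ifT //; lia.
rewrite mulr0 addr0; case: ifP => H1; case: ifP => H2 //; lia.
Qed.

Lemma sum_window (R : nzRingType) L lo hi (G : nat -> R) :
  \sum_(u < L) (if (lo <= u)%N && (u < hi)%N then G u else 0) =
  \sum_(v < minn L hi - lo) G (lo + v)%N.
Proof.
elim: L => [|L IH]; first by rewrite big_ord0 min0n sub0n big_ord0.
rewrite big_ord_recr /= IH.
case: ifP => H.
  have -> : (minn L.+1 hi - lo = (minn L hi - lo).+1)%N by lia.
  rewrite big_ord_recr /=; congr (_ + G _); lia.
have -> : (minn L.+1 hi - lo = (minn L hi - lo))%N by lia.
by rewrite addr0.
Qed.

Section Main.
Variables n h : nat.
Hypothesis hn : (1 <= n)%N.
Hypothesis hh : (1 <= h)%N.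
Local Notation hz := (h%:Z).
Local Notation N := (n.*2.+1).
Variable b : nat -> nat -> int.

Definition w (r : nat) : int := if (r <= n)%N then 1 else hz.

Definition T (r : nat) : {poly int} :=
  \sum_(u < n) \sum_(j < n | (r <= j)%N)
     (b (n.+1 + u) j * hz ^+ u)%:P * 'X^(n - u.+1 + (j - r)).

Definition yv (r : nat) : {poly int} :=
  if (r <= n)%N then 'X^(n.*2 - r) - T r.+1
  else (hz ^+ (r - n.+1))%:P * 'X^(n.*2 - r).

Definition F : {poly int} := 'X^N - T 0.

Lemma T_empty r : (n <= r)%N -> T r = 0.
Proof.
move=> hr; rewrite /T big1 // => u _; rewrite big1 // => j hj.
exfalso; have := ltn_ord j; lia.
Qed.

Lemma T_split r : (r < n)%N ->
  T r = 'X * T r.+1 + \sum_(u < n) (b (n.+1 + u) r * hz ^+ u)%:P * 'X^(n - u.+1).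
Proof.
move=> hr; rewrite /T mulr_sumr -big_split; apply: eq_bigr => u _ /=.
rewrite (bigD1 (Ordinal hr)) //= subnn addn0 addrC; congr (_ + _).
rewrite mulr_sumr; apply: eq_big => j.
  by rewrite -val_eqE /=; apply/idP/idP; lia.
move=> hj; rewrite mulrCA -exprS; congr (_ * 'X^_).
move: hj; rewrite -val_eqE /=; lia.
Qed.

Hypothesis Hb : forall r c, (r < N)%N -> (c < N)%N ->
  b r c = (if c == r.+1 then w r else 0) + (if (n < r)%N && (c < n)%N then b r c else 0).

Lemma colsum c : (c < N)%N ->
  \sum_(r < N) yv r * (b r c)%:P =
  (if (0 < c)%N then yv c.-1 * (w c.-1)%:P else 0) +
  (if (c < n)%N then \sum_(u < n) yv (n.+1 + u) * (b (n.+1 + u) c)%:P else 0).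
Proof.
move=> hc.
rewrite (eq_bigr (fun r : 'I_N => yv r * (w r)%:P * (1 + r == c)%N%:R +
   (if (n.+1 <= r)%N && (r < N)%N then
      (if (c < n)%N then yv r * (b r c)%:P else 0) else 0))); last first.
  move=> r _; rewrite {1}Hb //; rewrite polyCD mulrDr; congr (_ + _).
    by rewrite add1n eq_sym; case: eqP => _; rewrite ?mulr1 ?mulr0 ?mulr0.
  rewrite ltn_ord andbT; case: (n < r)%N; case: (c < n)%N => //=; rewrite ?mulr0 //.
rewrite big_split /= (sum_pick _ _ _ (fun r => yv r * (w r)%:P)).
rewrite (sum_window _ _ _ (fun r => if (c < n)%N then yv r * (b r c)%:P else 0)).
congr (_ + _).
  case: c hc => [|c] hc //=; rewrite subn1 /= ifT //; lia.
rewrite minnn; have -> : (N - n.+1 = n)%N by lia.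
by case: ifP => _ //; rewrite big1.
Qed.


Lemma blk_eq c :
  \sum_(u < n) yv (n.+1 + u) * (b (n.+1 + u) c)%:P =
  \sum_(u < n) (b (n.+1 + u) c * hz ^+ u)%:P * 'X^(n - u.+1).
Proof.
apply: eq_bigr => u _; rewrite /yv ifF; last by lia.
have -> : (n.+1 + u - n.+1 = u)%N by lia.
have -> : (n.*2 - (n.+1 + u) = n - u.+1)%N by lia.
rewrite polyCM; ring.
Qed.

Lemma col c : (c < N)%N ->
  'X * yv c - \sum_(r < N) yv r * (b r c)%:P = if c == 0%N then F else 0.
Proof.
move=> hc; rewrite colsum //.
case: (ssrnat.ltngtP c n) => [clt|cgt|->].
- rewrite blk_eq.
  case: c hc clt => [|c] hc clt /=.
    rewrite /F /yv /= (T_split hn) add0r exprS subn0; ring.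
  rewrite /w ifT; last by lia.
  rewrite /yv ifT; last by lia.
  rewrite ifT; last by lia.
  rewrite (T_split clt).
  have -> : (n.*2 - c = (n.*2 - c.+1).+1)%N by lia.
  rewrite exprS; ring.
- rewrite ifT; last by lia.
  have -> : (c == 0%N) = false by lia.
  rewrite addr0.
  case: (boolP (c == n.+1)) => [/eqP ->|cn] /=.
    rewrite /w /yv leqnn ltnn /=.
    rewrite (T_empty (leqnSn n)) subnn expr0 subr0.
    have -> : (n.*2 - n.+1 = n.-1)%N by lia.
    have -> : (n.*2 - n = n.-1.+1)%N by lia.
    rewrite exprS; ring.
  rewrite /w /yv.
  have -> : (c <= n)%N = false by lia.
  have -> : (c.-1 <= n)%N = false by lia.
  have -> : (c - n.+1 = (c.-1 - n.+1).+1)%N by lia.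
  have -> : (n.*2 - c.-1 = (n.*2 - c).+1)%N by lia.
  rewrite !exprS polyCM; ring.
- rewrite hn (_ : (n == 0%N) = false); last by lia.
  rewrite /w /yv leqnn (_ : (n.-1 <= n)%N = true); last by lia.
  rewrite !T_empty //; try lia.
  have -> : (n.*2 - n.-1 = (n.*2 - n).+1)%N by lia.
  rewrite exprS; ring.
Qed.

End Main.

Definition bof (n : nat) (B : 'M[int]_(n.*2.+1)) (r c : nat) : int :=
  B (inord r) (inord c).

Lemma inB_Hb n h (B : 'M[int]_(n.*2.+1)) : inB n h B ->
  forall r c, (r < n.*2.+1)%N -> (c < n.*2.+1)%N ->
  bof B r c = (if c == r.+1 then w n h r else 0) +
              (if (n < r)%N && (c < n)%N then bof B r c else 0).
Proof.
move=> H r c hr hc; move: (H (inord r) (inord c)) => /=.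
rewrite /idx !inordK // -/(bof B r c).
case: ifP => C1 E.
  rewrite E; have -> : (c == r.+1) by lia.
  have -> : (n < r)%N && (c < n)%N = false by lia.
  by rewrite /w; have -> : (r <= n)%N by lia.
case: ifP E => C2 E.
  rewrite E; have -> : (c == r.+1) by lia.
  have -> : (n < r)%N && (c < n)%N = false by lia.
  by rewrite /w addr0; have -> : (r <= n)%N = false by lia.
have -> : (c == r.+1) = false by lia.
case: ifP E => C3 E.
  have -> : (n < r)%N && (c < n)%N by lia.
  by rewrite add0r.
have -> : (n < r)%N && (c < n)%N = false by lia.
by rewrite E addr0.
Qed.

Lemma prod_negw n h k :
  \prod_(i < k) (- (w n h i)%:P) = ((-1) ^+ k * (h%:Z) ^+ (k - n.+1))%:P.
Proof.
elim: k => [|k IH]; first by rewrite big_ord0 expr0 mulr1.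
rewrite big_ord_recr /= IH /w; case: ifP => hk.
  have -> : (k.+1 - n.+1 = k - n.+1)%N by lia.
  by rewrite exprS !polyCM polyCN; ring.
have -> : (k.+1 - n.+1 = (k - n.+1).+1)%N by lia.
by rewrite !exprS !polyCM polyCN; ring.
Qed.

Lemma charF n h (hn : (1 <= n)%N) (hh : (1 <= h)%N) (B : 'M[int]_(n.*2.+1)) :
  inB n h B -> char_poly B = F n h (bof B).
Proof.
move=> HB; have Hb := inB_Hb HB.
set M := char_poly_mx B.
set y : 'rV_(n.*2.+1) := \row_(r < n.*2.+1) yv n h (bof B) r.
have Hy : y *m M = F n h (bof B) *: delta_mx 0 0.
  apply/rowP => c; rewrite /M /char_poly_mx mulmxBr mul_mx_scalar !mxE.
  under eq_bigr do rewrite !mxE.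
  have := col hn hh Hb (ltn_ord c).
  rewrite (eq_bigr (fun r : 'I_(n.*2.+1) => yv n h (bof B) r * (B r c)%:P)); last first.
    by move=> r _; rewrite /bof !inord_val.
  move=> ->; have -> : (c == 0) = ((c : nat) == 0%N) by rewrite -val_eqE.
  by case: ((c : nat) == 0%N); rewrite ?mulr1 ?mulr0.
have := congr1 (fun X => (X *m \adj M) 0 ord_max) Hy.
rewrite /= -mulmxA mul_mx_adj mul_mx_scalar -scalemxAl -rowE !mxE.
have Li : forall i : 'I_(n.*2.+1).-1, lift ord_max i = inord i :> 'I_(n.*2.+1).
  move=> i; apply: val_inj; rewrite /= inordK /bump; last by have /= := ltn_ord i; lia.
  by rewrite leqNgt ltn_ord.
have Lj : forall j : 'I_(n.*2.+1).-1, lift ord0 j = inord j.+1 :> 'I_(n.*2.+1).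
  move=> j; apply: val_inj; rewrite /= inordK //; have /= := ltn_ord j; lia.
have Hm : forall i j : 'I_(n.*2.+1).-1, (row' ord_max (col' 0 M)) i j =
    'X *+ ((i : nat) == j.+1) - (bof B i j.+1)%:P.
  move=> i j; rewrite !mxE Li Lj /bof -val_eqE /= !inordK //;
    have /= := ltn_ord i; have /= := ltn_ord j; lia.
rewrite /cofactor (@det_trig _ _ (row' ord_max (col' 0 M))); last first.
  apply/is_trig_mxP => i j hij; rewrite Hm.
  have /= := ltn_ord i; have /= := ltn_ord j => hj hi.
  rewrite Hb; try lia.
  have -> : ((i : nat) == j.+1) = false by lia.
  have -> : (j.+1 == (i : nat).+1) = false by lia.
  have -> : (n < i)%N && (j.+1 < n)%N = false by lia.
  by rewrite addr0 subr0.
rewrite (eq_bigr (fun i : 'I_(n.*2.+1).-1 => - (w n h i)%:P)); last first.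
  move=> i _; rewrite Hm.
  have /= := ltn_ord i => hi.
  rewrite Hb; try lia.
  have -> : ((i : nat) == i.+1) = false by lia.
  have -> : (n < i)%N && (i.+1 < n)%N = false by lia.
  by rewrite eqxx addr0 sub0r.
rewrite prod_negw /= /yv.
have -> : (n.*2 <= n)%N = false by lia.
rewrite subnn expr0 mulr1 addn0.
have -> : ((-1) ^+ n.*2 = 1 :> int) by rewrite -mul2n exprM sqrrN !expr1n.
have -> : ((-1) ^+ n.*2 = 1 :> {poly int}) by rewrite -mul2n exprM sqrrN !expr1n.
rewrite mul1r mul1r => /mulIf; apply.
by rewrite polyC_eq0 expf_neq0 //; lia.
Qed.

Definition lo (n m : nat) := (n - m.+1)%N.
Definition len (n m : nat) := (minn n (n.*2 - m.+1) - lo n m)%N.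
Definition dg (n : nat) (b : nat -> nat -> int) (m v : nat) :=
  b (n.+1 + (lo n m + v))%N (m - (n - (lo n m + v).+1))%N.

Lemma coefF n h b m : (F n h b)`_m =
  (m == n.*2.+1)%:R - (h%:Z) ^+ (lo n m) * \sum_(v < len n m) dg n b m v * (h%:Z) ^+ v.
Proof.
rewrite /F /T coefB coefXn coef_sum; congr (_ - _).
rewrite (eq_bigr (fun u : 'I_n => if (lo n m <= u)%N && (u < n.*2 - m.+1)%N then
   b (n.+1 + u)%N (m - (n - u.+1))%N * h%:Z ^+ u else 0)); last first.
  move=> u _; rewrite coef_sum.
  rewrite (eq_bigr (fun j : 'I_n => (b (n.+1 + u)%N j * h%:Z ^+ u) * ((n - u.+1 + j)%N == m)%:R)); last first.
    by move=> j _; rewrite coefCM coefXn subn0 eq_sym.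
  rewrite big_mkcond /=.
  rewrite (sum_pick _ _ _ (fun j => b (n.+1 + u)%N j * h%:Z ^+ u)).
  have -> : (n - u.+1 <= m)%N && (m - (n - u.+1) < n)%N =
            (lo n m <= u)%N && (u < n.*2 - m.+1)%N by have := ltn_ord u; rewrite /lo; lia.
  by [].
rewrite (sum_window _ _ _ (fun u => b (n.+1 + u)%N (m - (n - u.+1))%N * h%:Z ^+ u)).
rewrite mulr_sumr; apply: eq_bigr => v _.
by rewrite /dg exprD mulrCA.
Qed.

Lemma negcoefF n h b m : m != n.*2.+1 -> - (F n h b)`_m =
  (h%:Z) ^+ (lo n m) * \sum_(v < len n m) dg n b m v * (h%:Z) ^+ v.
Proof. by move/negbTE=> E; rewrite coefF E mulr0n sub0r opprK. Qed.

Lemma len0 n m : (n.*2.+1 <= m.+2)%N -> len n m = 0%N.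
Proof. by rewrite /len /lo; lia. Qed.

Lemma coefF_hi n h b m : (n.*2.+1 <= m)%N -> (F n h b)`_m = (m == n.*2.+1)%:R.
Proof.
move=> hm; rewrite coefF (len0 (m := m)) ?big_ord0 ?mulr0 ?subr0 //; lia.
Qed.

Lemma coefF_mid n h b m : (n.*2.+1 <= m.+2)%N -> (m <= n.*2)%N -> (F n h b)`_m = 0.
Proof.
move=> h1 h2; rewrite coefF (len0 h1) big_ord0 mulr0 subr0.
by have -> : (m == n.*2.+1) = false by lia.
Qed.

Lemma size_lead (p : {poly int}) N :
  (forall m, (N < m)%N -> p`_m = 0) -> p`_N = 1 -> size p = N.+1 /\ lead_coef p = 1.
Proof.
move=> H1 H2.
have s1 : (size p <= N.+1)%N by apply/leq_sizeP => j hj; apply: H1.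
have s2 : (N < size p)%N.
  rewrite ltnNge; apply/negP => /leq_sizeP /(_ N (leqnn N)).
  by rewrite H2 => /eqP; rewrite oner_eq0.
have sE : size p = N.+1 by apply/eqP; rewrite eqn_leq s1 s2.
by split => //; rewrite lead_coefE sE.
Qed.

Lemma inB_blk n h (B : 'M[int]_(n.*2.+1)) : inB n h B ->
  forall r c, (n < r)%N -> (r < n.*2.+1)%N -> (c < n)%N -> 0 <= bof B r c < h%:Z.
Proof.
move=> H r c h1 h2 h3; move: (H (inord r) (inord c)) => /=.
rewrite /idx !inordK -/(bof B r c); try lia.
rewrite ifF; last by lia.
rewrite ifF; last by lia.
by rewrite ifT; [case=> -> ->|lia].
Qed.

Lemma dg_bound n h (B : 'M[int]_(n.*2.+1)) m v : inB n h B ->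
  (v < len n m)%N -> 0 <= dg n (bof B) m v < h%:Z.
Proof.
move=> HB hv; apply: (inB_blk HB); move: hv; rewrite /len /lo; lia.
Qed.

Lemma part1 n h (hn : (1 <= n)%N) (hh : (1 <= h)%N) (B : 'M[int]_(n.*2.+1)) :
  inB n h B -> inP n h (F n h (bof B)).
Proof.
move=> HB; split.
- apply: size_lead => [m hm|]; rewrite coefF_hi ?eqxx //; last by lia.
  by have -> : (m == n.*2.+1) = false by lia.
- by rewrite coefF_mid //; lia.
- by rewrite coefF_mid //; lia.
- move=> k hk; rewrite negcoefF; last by lia.
  have -> : lo n (n.*2 - k) = 0%N by rewrite /lo; lia.
  rewrite expr0 mul1r.
  have := dig_bound hh (fun v hv => dg_bound (m := n.*2 - k) HB hv).
  have -> : len n (n.*2 - k) = (k - 1)%N by rewrite /len /lo; lia.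
  by case/andP.
- move=> k hk; rewrite negcoefF; last by lia.
  have -> : lo n (n - k) = (k - 1)%N by rewrite /lo; lia.
  eexists; split; first by rewrite mulrC.
  have := dig_bound hh (fun v hv => dg_bound (m := n - k) HB hv).
  have -> : len n (n - k) = (n - k + 1)%N by rewrite /len /lo; lia.
  by case/andP.
Qed.

Lemma part2 n h (hn : (1 <= n)%N) (hh : (1 <= h)%N) (B1 B2 : 'M[int]_(n.*2.+1)) :
  inB n h B1 -> inB n h B2 -> F n h (bof B1) = F n h (bof B2) -> B1 = B2.
Proof.
move=> HB1 HB2 E.
have Hd : forall u j, (u < n)%N -> (j < n)%N ->
    bof B1 (n.+1 + u) j = bof B2 (n.+1 + u) j.
  move=> u j hu hj; pose m := (n - u.+1 + j)%N.
  have : - (F n h (bof B1))`_m = - (F n h (bof B2))`_m by rewrite E.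
  rewrite !negcoefF; try (rewrite /m; lia).
  have hz0 : h%:Z ^+ lo n m != 0 by rewrite expf_neq0 //; lia.
  move/(mulfI hz0) => H.
  have := dig_uniq hh (fun v hv => dg_bound (m := m) HB1 hv)
                      (fun v hv => dg_bound (m := m) HB2 hv) H.
  move=> /(_ (u - lo n m)%N).
  rewrite /dg.
  have -> : (lo n m + (u - lo n m) = u)%N by rewrite /lo /m; lia.
  have -> : (m - (n - u.+1) = j)%N by rewrite /m; lia.
  apply; rewrite /len /lo /m; lia.
apply/matrixP => i j.
move: (HB1 i j) (HB2 i j) => /=.
case: ifP => C1; first by move=> -> ->.
case: ifP => C2; first by move=> -> ->.
case: ifP => C3; last by move=> -> ->.
move=> _ _; rewrite /idx in C3.
have := Hd (i - n.+1)%N j.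
move=> H; have hi := ltn_ord i.
have Ei : inord (n.+1 + (i - n.+1)) = i :> 'I_(n.*2.+1).
  by apply: val_inj; rewrite /= inordK; lia.
move: H; rewrite /bof Ei !inord_val; apply; lia.
Qed.

Lemma PoszX (a k : nat) : (a ^ k)%N%:Z = a%:Z ^+ k.
Proof. by rewrite -!natz natrX. Qed.

Lemma digsum h (hh : (1 <= h)%N) lo L (a q : nat) :
  a = (q * h ^ lo)%N -> (q < h ^ L)%N ->
  (h%:Z) ^+ lo * \sum_(v < L) ((a %/ h ^ (lo + v)) %% h)%N%:Z * (h%:Z) ^+ v = a%:Z.
Proof.
move=> -> hq.
under eq_bigr do rewrite expnD divnMA mulnK ?expn_gt0 ?hh //.
by rewrite dig_exist // PoszM PoszX mulrC.
Qed.

Lemma part3 n h (hn : (1 <= n)%N) (hh : (1 <= h)%N) (p : {poly int}) :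
  inP n h p -> exists B : 'M[int]_(n.*2.+1), inB n h B /\ F n h (bof B) = p.
Proof.
case=> [[Hs Hl] H2n H2n1 Hf1 Hf2].
pose A m := `|- p`_m|%N.
pose dig u j := ((A (n - u.+1 + j)%N %/ h ^ u) %% h)%N.
pose B : 'M[int]_(n.*2.+1) := \matrix_(i, j)
  (if (i <= n)%N && ((j : nat) == i.+1) then 1
   else if (n < i < n.*2)%N && ((j : nat) == i.+1) then h%:Z
   else if (n < i)%N && (j < n)%N then (dig (i - n.+1) j)%N%:Z else 0).
have HB : inB n h B.
  move=> i j /=; rewrite /idx mxE.
  have -> : (- n%:Z <= i%:Z - n%:Z <= 0) && (j%:Z - n%:Z == i%:Z - n%:Z + 1) =
            (i <= n)%N && ((j : nat) == i.+1) by lia.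
  have -> : (1 <= i%:Z - n%:Z <= n%:Z - 1) && (j%:Z - n%:Z == i%:Z - n%:Z + 1) =
            (n < i < n.*2)%N && ((j : nat) == i.+1) by lia.
  have -> : (1 <= i%:Z - n%:Z) && (j%:Z - n%:Z <= -1) = (n < i)%N && (j < n)%N by lia.
  case: ((i <= n)%N && ((j : nat) == i.+1)) => //.
  case: ((n < i < n.*2)%N && ((j : nat) == i.+1)) => //.
  case: ((n < i)%N && (j < n)%N) => //.
  by rewrite ltz_nat ltn_pmod.
exists B; split => //.
have Hd : forall m v, (m <= n.*2 - 2)%N -> (v < len n m)%N ->
    dg n (bof B) m v = ((A m %/ h ^ (lo n m + v)) %% h)%N%:Z.
  move=> m v hm hv; move: hv; rewrite /len /lo => hv.
  rewrite /dg /bof /lo mxE !inordK; try lia.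
  rewrite ifF; last by lia.
  rewrite ifF; last by lia.
  rewrite ifT; last by lia.
  rewrite /dig; congr (((A _ %/ h ^ _) %% h)%N%:Z); lia.
apply/polyP => m.
case: (ltnP (n.*2 - 2) m) => hm.
  case: (ltnP n.*2 m) => hm2.
    rewrite coefF_hi //; case: eqP => [->|ne].
      by move: Hl; rewrite lead_coefE Hs.
    by rewrite nth_default // Hs; lia.
  rewrite coefF_mid; try lia.
  case: (eqVneq m n.*2) => [->|ne]; first by rewrite H2n.
  by have -> : m = (n.*2 - 1)%N by lia.
apply: oppr_inj; rewrite negcoefF; last by lia.
rewrite (eq_bigr (fun v : 'I_(len n m) => ((A m %/ h ^ (lo n m + v)) %% h)%N%:Z * h%:Z ^+ v)); last first.
  by move=> v _; rewrite Hd.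
have Am : (A m)%:Z = - p`_m.
  rewrite /A gez0_abs //.
  case: (leqP (n.-1) m) => hm2.
    have hk : (2 <= n.*2 - m <= n.+1)%N by lia.
    have := Hf1 _ hk; rewrite (_ : (n.*2 - (n.*2 - m) = m)%N); last by lia.
    by case.
  have hk : (2 <= n - m <= n)%N by lia.
  have := Hf2 _ hk; rewrite (_ : (n - (n - m) = m)%N); last by lia.
  by case=> [q [-> [q0 _]]]; rewrite mulr_ge0 // exprn_ge0.
rewrite -Am.
case: (leqP (n.-1) m) => hm2.
  apply: (digsum hh (q := A m)); first by rewrite /lo (_ : (n - m.+1 = 0)%N) ?expn0 ?muln1 //; lia.
  have hk : (2 <= n.*2 - m <= n.+1)%N by lia.
  have := Hf1 _ hk; rewrite (_ : (n.*2 - (n.*2 - m) = m)%N); last by lia.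
  case=> _; rewrite -Am -PoszX ltz_nat (_ : len n m = (n.*2 - m - 1)%N) //.
  by rewrite /len /lo; lia.
have hk : (2 <= n - m <= n)%N by lia.
have := Hf2 _ hk; rewrite (_ : (n - (n - m) = m)%N); last by lia.
case=> q [Eq [q0 q1]].
apply: (digsum hh (q := `|q|%N)).
  apply/eqP; rewrite -(eqr_nat int) !natz Am Eq PoszM gez0_abs // PoszX.
  by rewrite /lo (_ : (n - m.+1 = n - m - 1)%N) //; lia.
rewrite -ltz_nat PoszX gez0_abs // (_ : len n m = (m + 1)%N) //.
by rewrite /len /lo; lia.
Qed.

Unset Implicit Arguments.

Theorem mainTheorem4 (n h : nat) (hn : (1 <= n)%N) (hh : (1 <= h)%N) :
  [/\ (forall B : 'M[int]_(n.*2.+1), inB n h B -> inP n h (char_poly B)),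
      (forall B1 B2 : 'M[int]_(n.*2.+1), inB n h B1 -> inB n h B2 ->
         char_poly B1 = char_poly B2 -> B1 = B2) &
      (forall p : {poly int}, inP n h p ->
         exists B : 'M[int]_(n.*2.+1), inB n h B /\ char_poly B = p)].
Proof.
split.
- by move=> B HB; rewrite (charF hn hh HB); apply: part1.
- move=> B1 B2 H1 H2; rewrite (charF hn hh H1) (charF hn hh H2).
  exact: part2.
- move=> p Hp; have [B [HB E]] := part3 hn hh Hp.
  by exists B; split => //; rewrite (charF hn hh HB).
Qed.
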